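(* Suppose $\sum_{r:\rho_r\le 1/(4k^2)}\rho_r(1-\rho_r)^k\ge\frac{1-\tau}{2}$. For every $\Delta\in(0,1)$, if $N\ge 12k^2\ln(2R/\Delta)+\frac{16\ln(2/\Delta)}{1-\tau}$, then with probability at least $1-\Delta$, $1-\widehat\tau\ge\frac{1-\tau}{8}$.
   Context: Let $R\ge 2$ be an integer and $\rho=(\rho_1,\dots,\rho_R)$ a probability vector with $\rho_r>0$ for all $r$. Let $Y_1,\dots,Y_N$ be i.i.d. labels with $\mathbb P(Y_j=r)=\rho_r$, $N_r=|\{j:Y_j=r\}|$, $\widehat\rho_r=N_r/N$. Fix an integer $k\ge1$. Set $\tau:=1-\sum_{r}\rho_r(1-\rho_r)^k$ and $\widehat\tau:=1-\sum_r\widehat\rho_r(1-\widehat\rho_r)^k$. *)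

(* Defs.v *)
From HB Require Import structures.
From mathcomp Require Import all_boot all_order all_algebra.
From mathcomp Require Import all_classical all_reals all_analysis.
Set Implicit Arguments. Unset Strict Implicit. Unset Printing Implicit Defensive.
Import Order.TTheory GRing.Theory Num.Theory.
Local Open Scope ring_scope.

(* Labels take values in 'I_R (label r in the paper = r.+1 here).
   A sample of N labels is a finite function Y : {ffun 'I_N -> 'I_R}. *)

Definition tau (K : realType) (R k : nat) (rho : 'I_R -> K) : K :=
  1 - \sum_(r < R) rho r * (1 - rho r) ^+ k.

Definition countN (R N : nat) (Y : {ffun 'I_N -> 'I_R}) (r : 'I_R) : nat :=
  #|[set j : 'I_N | Y j == r]|.

Definition rhohat (K : realType) (R N : nat) (Y : {ffun 'I_N -> 'I_R}) (r : 'I_R) : K :=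
  (countN Y r)%:R / N%:R.

Definition tauhat (K : realType) (R N k : nat) (Y : {ffun 'I_N -> 'I_R}) : K :=
  1 - \sum_(r < R) rhohat K Y r * (1 - rhohat K Y r) ^+ k.

Definition iid_prob (K : realType) (R N : nat) (rho : 'I_R -> K)
  (E : pred {ffun 'I_N -> 'I_R}) : K :=
  \sum_(y : {ffun 'I_N -> 'I_R} | E y) \prod_(j < N) rho (y j).

(* Main.v *)
Require Import Defs.
From HB Require Import structures.
From mathcomp Require Import all_boot all_order all_algebra.
From mathcomp Require Import all_classical all_reals all_analysis.
From mathcomp Require Import lra ring.
Import Order.TTheory GRing.Theory Num.Theory.
Local Open Scope ring_scope.

Lemma w_ge0 (K : realType) (R N : nat) (rho : 'I_R -> K)
  (Hpos : forall r, 0 < rho r) (y : {ffun 'I_N -> 'I_R}) :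
  0 <= \prod_(j < N) rho (y j).
Proof. by apply: prodr_ge0 => j _; apply: ltW. Qed.

Lemma mgf (K : realType) (R N : nat) (rho g : 'I_R -> K) :
  \sum_(y : {ffun 'I_N -> 'I_R}) \prod_(j < N) rho (y j) * \prod_(j < N) g (y j)
  = (\sum_(r < R) rho r * g r) ^+ N.
Proof.
rewrite -[in RHS](card_ord N) -prodr_const bigA_distr_bigA /=.
by apply: eq_bigr => y _; rewrite big_split.
Qed.

Lemma iid_total (K : realType) (R N : nat) (rho : 'I_R -> K) :
  \sum_(y : {ffun 'I_N -> 'I_R}) \prod_(j < N) rho (y j)
  = (\sum_(r < R) rho r) ^+ N.
Proof.
have -> : \sum_(r < R) rho r = \sum_(r < R) rho r * 1.
  by apply: eq_bigr => r _; rewrite mulr1.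
rewrite -(@mgf K R N rho (fun _ => 1)); apply: eq_bigr => y _; by rewrite prodr_const expr1n mulr1.
Qed.

Lemma iid_markov (K : realType) (R N : nat) (rho g : 'I_R -> K)
  (Hpos : forall r, 0 < rho r) (E : pred {ffun 'I_N -> 'I_R}) (c : K) :
  (forall r, 0 <= g r) -> 0 < c ->
  (forall y, E y -> c <= \prod_(j < N) g (y j)) ->
  iid_prob rho E <= (\sum_(r < R) rho r * g r) ^+ N / c.
Proof.
move=> g0 c0 HE; rewrite /iid_prob -mgf mulr_suml [X in _ <= X](bigID E) /=.
apply: ler_wpDr.
  apply: sumr_ge0 => y _; apply: divr_ge0; last exact: ltW.
  by apply: mulr_ge0; [exact: w_ge0|apply: prodr_ge0].
apply: ler_sum => y Ey; rewrite ler_pdivlMr // ler_wpM2l //; first exact: w_ge0.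
exact: HE.
Qed.

Lemma prod_count (K : realType) (R N : nat) (g : 'I_R -> K) (y : {ffun 'I_N -> 'I_R}) :
  \prod_(j < N) g (y j) = \prod_(r < R) g r ^+ countN y r.
Proof.
rewrite (partition_big y predT) //=; apply: eq_bigr => r _.
rewrite /countN cardsE -prodr_const.
by apply: eq_bigr => j /eqP ->.
Qed.

Lemma sq_le (K : realType) (z a : K) : 0 <= z -> z <= a -> z ^+ 2 <= a * a.
Proof. by move=> z0 za; rewrite expr2 ler_pM. Qed.

Lemma sq_ge (K : realType) (z a : K) : 0 <= a -> a <= z -> a * a <= z ^+ 2.
Proof. by move=> a0 az; rewrite expr2 ler_pM. Qed.

Arguments sq_le {K z a}.
Arguments sq_ge {K z a}.

Lemma ln2_ge (K : realType) : 2 / 3 <= ln (2 : K).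
Proof.
rewrite -ler_expR lnK ?posrE //.
have -> : (2 / 3 : K) = 16%:R * (1 / 24) by lra.
rewrite expRM_natl.
set x := expR (1 / 24 : K).
have x0 : 0 < x by apply: expR_gt0.
have h1 : x <= 24 / 23.
  have := expR_ge1Dx (- (1 / 24) : K); rewrite expRN -/x => h.
  have := ler_wpM2r (ltW x0) h; rewrite mulVf ?lt0r_neq0 //; lra.
have h2 : x ^+ 2 <= 49 / 45.
  by have := sq_le (ltW x0) h1; lra.
have h4 : (x ^+ 2) ^+ 2 <= 19 / 16.
  by have := sq_le (exprn_ge0 _ (ltW x0)) h2; lra.
have h8 : ((x ^+ 2) ^+ 2) ^+ 2 <= 361 / 256.
  by have := sq_le (exprn_ge0 _ (exprn_ge0 _ (ltW x0))) h4; lra.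
have -> : x ^+ 16 = (((x ^+ 2) ^+ 2) ^+ 2) ^+ 2 by rewrite -!exprM.
by have := sq_le (exprn_ge0 _ (exprn_ge0 _ (exprn_ge0 _ (ltW x0)))) h8; lra.
Qed.

Lemma ln2_le (K : realType) : ln (2 : K) <= 3 / 4.
Proof.
rewrite -ler_expR lnK ?posrE //.
have -> : (3 / 4 : K) = 8%:R * (3 / 32) by lra.
rewrite expRM_natl.
set x := expR (3 / 32 : K).
have h1 : 35 / 32 <= x by have := expR_ge1Dx (3 / 32 : K); rewrite -/x; lra.
have h2 : 25 / 21 <= x ^+ 2.
  have a0 : (0 : K) <= 35 / 32 by lra.
  by have := sq_ge a0 h1; lra.
have h4 : 17 / 12 <= (x ^+ 2) ^+ 2.
  have a0 : (0 : K) <= 25 / 21 by lra.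
  by have := sq_ge a0 h2; lra.
have -> : x ^+ 8 = ((x ^+ 2) ^+ 2) ^+ 2 by rewrite -!exprM.
have a0 : (0 : K) <= 17 / 12 by lra.
by have := sq_ge a0 h4; lra.
Qed.

Lemma bern (K : realType) (x : K) (n : nat) : 0 <= x -> x <= 1 ->
  1 - n%:R * x <= (1 - x) ^+ n.
Proof.
move=> x0 x1; elim: n => [|n IH]; first by rewrite mul0r subr0 expr0.
rewrite exprSr.
have h : (1 - n%:R * x) * (1 - x) <= (1 - x) ^+ n * (1 - x).
  by rewrite ler_wpM2r // subr_ge0.
apply: le_trans h; rewrite -natr1.
have : 0 <= n%:R * x * x by rewrite mulr_ge0 // mulr_ge0.
lra.
Qed.

Lemma countN_le (R N : nat) (y : {ffun 'I_N -> 'I_R}) r : (countN y r <= N)%N.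
Proof. by rewrite /countN -[X in (_ <= X)%N]card_ord max_card. Qed.

Lemma rhohat_ge0 (K : realType) (R N : nat) (y : {ffun 'I_N -> 'I_R}) r :
  0 <= rhohat K y r.
Proof. by rewrite /rhohat divr_ge0. Qed.

Lemma rhohat_le1 (K : realType) (R N : nat) (y : {ffun 'I_N -> 'I_R}) r :
  rhohat K y r <= 1.
Proof.
rewrite /rhohat; case: (posnP N) => [N0|N0].
  by have -> : (N%:R : K) = 0 by rewrite N0.

by rewrite ler_pdivrMr ?ltr0n // mul1r ler_nat countN_le.
Qed.

Lemma det (K : realType) (R N k : nat) (S : pred 'I_R)
  (y : {ffun 'I_N -> 'I_R}) (q : K) :
  (0 < N)%N -> (1 <= k)%N ->
  (forall r, S r -> (countN y r)%:R <= N%:R / (2 * k%:R) :> K) ->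
  N%:R * q / 4 <= (\sum_(r < R | S r) countN y r)%:R ->
  q / 8 <= 1 - tauhat K k y.
Proof.
move=> N0 k1 HS HM.
have n0 : (0 : K) < N%:R by rewrite ltr0n.
have kk0 : (0 : K) < k%:R by rewrite ltr0n.
have -> : 1 - tauhat K k y = \sum_(r < R) rhohat K y r * (1 - rhohat K y r) ^+ k.
  by rewrite /tauhat; ring.
have step1 : \sum_(r < R | S r) rhohat K y r / 2 <=
    \sum_(r < R) rhohat K y r * (1 - rhohat K y r) ^+ k.
  rewrite [X in _ <= X](bigID S) /=; apply: ler_wpDr.
    apply: sumr_ge0 => r _; apply: mulr_ge0; first exact: rhohat_ge0.
    by apply: exprn_ge0; rewrite subr_ge0 rhohat_le1.
  apply: ler_sum => r Sr; apply: ler_wpM2l; first exact: rhohat_ge0.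
  have hb := @bern K _ k (@rhohat_ge0 K _ _ y r) (@rhohat_le1 K _ _ y r).
  have : k%:R * rhohat K y r <= 1 / 2.
    have := HS r Sr; rewrite /rhohat => h.
    rewrite mulrA ler_pdivrMr //.
    have h2 := ler_wpM2l (ltW kk0) h.
    have -> : 1 / 2 * N%:R = k%:R * (N%:R / (2 * k%:R)) :> K.
      by field; rewrite lt0r_neq0.
    exact: h2.
  lra.
apply: le_trans step1.
have -> : \sum_(r < R | S r) rhohat K y r / 2 =
    (\sum_(r < R | S r) countN y r)%:R / N%:R / 2.
  rewrite natr_sum !mulr_suml; apply: eq_bigr => r _; by rewrite /rhohat.
rewrite ler_pdivlMr // ler_pdivlMr //.
have -> : q / 8 * 2 * N%:R = N%:R * q / 4 :> K by field.
exact: HM.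
Qed.

Lemma union (K : realType) (R N : nat) (rho : 'I_R -> K)
  (Hpos : forall r, 0 < rho r) (Hsum : \sum_(r < R) rho r = 1)
  (E B : pred {ffun 'I_N -> 'I_R}) (Bs : 'I_R -> pred {ffun 'I_N -> 'I_R}) :
  (forall y, ~~ E y -> B y \/ exists r, Bs r y) ->
  1 - (iid_prob rho B + \sum_(r < R) iid_prob rho (Bs r)) <= iid_prob rho E.
Proof.
move=> HE.
have tot : \sum_(y : {ffun 'I_N -> 'I_R}) \prod_(j < N) rho (y j) = 1.
  by rewrite iid_total Hsum expr1n.
have split1 : 1 = \sum_(y | E y) \prod_(j < N) rho (y j) +
    \sum_(y | ~~ E y) \prod_(j < N) rho (y j).
  by rewrite -{1}tot (bigID E).
have hc : \sum_(y | ~~ E y) \prod_(j < N) rho (y j) <=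
    iid_prob rho B + \sum_(r < R) iid_prob rho (Bs r).
  rewrite /iid_prob.
  under [X in _ <= _ + X]eq_bigr do rewrite big_mkcond.
  rewrite exchange_big /= big_mkcond [X in _ <= X + _]big_mkcond -big_split /=.
  apply: ler_sum => y _.
  have w0 := @w_ge0 K R N rho Hpos y.
  have s0 : 0 <= \sum_(r < R) (if Bs r y then \prod_(j < N) rho (y j) else 0).
    by apply: sumr_ge0 => r _; case: ifP.
  case: (boolP (E y)) => Ey /=.
    by apply: addr_ge0 => //; case: ifP.
  case: (HE y Ey) => [By|[r Br]]; first by rewrite By; lra.
  rewrite (bigD1 r) //= Br.
  have : 0 <= \sum_(i < R | i != r) (if Bs i y then \prod_(j < N) rho (y j) else 0).
    by apply: sumr_ge0 => i _; case: ifP.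
  case: ifP => _; lra.
rewrite /iid_prob /=; move: split1 hc; rewrite /iid_prob; lra.
Qed.

Lemma arith_up (K : realType) (n rh kk L l2 : K) : 1 <= kk -> 0 <= n ->
  rh <= 1 / (4 * kk ^+ 2) -> 2 / 3 <= l2 -> 12 * kk ^+ 2 * L <= n ->
  n * rh - l2 * (n / (2 * kk)) <= - L.
Proof.
move=> kk1 n0 hr hl hn.
have kk0 : 0 < kk by lra.
set u := kk^-1.
have u0 : 0 < u by rewrite /u invr_gt0.
have u1 : u <= 1 by rewrite /u invf_le1.
have e1 : 1 / (4 * kk ^+ 2) = u ^+ 2 / 4 by rewrite /u; field; rewrite lt0r_neq0.
have e2 : n / (2 * kk) = n * u / 2 by rewrite /u; field; rewrite lt0r_neq0.
rewrite e2; rewrite e1 in hr.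
have hA : n * rh <= n * (u ^+ 2 / 4) by rewrite ler_wpM2l.
have hL : L <= n * u ^+ 2 / 12.
  have := ler_wpM2r (exprn_ge0 2 (ltW u0)) hn.
  have -> : 12 * kk ^+ 2 * L * u ^+ 2 = 12 * L by rewrite /u; field; rewrite lt0r_neq0.
  lra.
have hu2 : u ^+ 2 <= u by rewrite expr2 ger_pMl.
have hC : n * u ^+ 2 <= n * u by rewrite ler_wpM2l.
have hD : 2 / 3 * (n * u) <= l2 * (n * u) by rewrite ler_wpM2r // mulr_ge0 // ltW.
lra.
Qed.

Lemma upper (K : realType) (R N k : nat) (rho : 'I_R -> K)
  (Hpos : forall r, 0 < rho r) (Hsum : \sum_(r < R) rho r = 1) (r0 : 'I_R) (L : K) :
  (1 <= k)%N -> rho r0 <= 1 / (4 * (k%:R) ^+ 2) -> 12 * (k%:R) ^+ 2 * L <= N%:R ->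
  iid_prob rho (fun y : {ffun 'I_N -> 'I_R} =>
     N%:R / (2 * k%:R) < (countN y r0)%:R :> K) <= expR (- L).
Proof.
move=> k1 hr hn.
have l2 := @ln2_ge K.
have e2 : expR (ln (2 : K)) = 2 by rewrite lnK // posrE.
pose g := fun r : 'I_R => if r == r0 then 2 else 1 : K.
pose c := expR (ln 2 * (N%:R / (2 * k%:R))) : K.
have hg : forall r, 0 <= g r by move=> r; rewrite /g; case: ifP.
have hc : 0 < c by exact: expR_gt0.
have hE : forall y : {ffun 'I_N -> 'I_R},
    N%:R / (2 * k%:R) < (countN y r0)%:R :> K -> c <= \prod_(j < N) g (y j).
  move=> y /= hy; rewrite prod_count (bigD1 r0) //= big1 ?mulr1; last first.
    by move=> r /negbTE hr'; rewrite /g hr' expr1n.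
  rewrite /g eqxx -e2 -expRM_natl /c ler_expR mulrC ler_wpM2r //.
    by apply: le_trans l2; lra.
  exact: ltW.
apply: le_trans (@iid_markov K R N rho g Hpos _ c hg hc hE) _.
have hs : \sum_(r < R) rho r * g r = 1 + rho r0.
  rewrite -Hsum (bigD1 r0) //= [in RHS](bigD1 r0) //= /g eqxx.
  have -> : \sum_(i < R | i != r0) rho i * (if i == r0 then 2 else 1) =
            \sum_(i < R | i != r0) rho i.
    by apply: eq_bigr => i /negbTE ->; rewrite mulr1.
  lra.
rewrite hs.
have h1 : (1 + rho r0) ^+ N <= expR (rho r0) ^+ N.
  apply: lerXn2r; rewrite ?posrE ?nnegrE ?expR_ge0 ?expR_ge1Dx //.
  by apply: addr_ge0 => //; apply: ltW.
apply: le_trans (ler_wpM2r _ h1) _; first by rewrite invr_ge0 expR_ge0.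
rewrite -expRM_natl /c -expRB ler_expR.
by apply: arith_up => //; rewrite ler1n.
Qed.

Lemma lower (K : realType) (R N : nat) (rho : 'I_R -> K)
  (Hpos : forall r, 0 < rho r) (Hsum : \sum_(r < R) rho r = 1)
  (S : pred 'I_R) (q L : K) :
  0 < q -> q / 2 <= \sum_(r < R | S r) rho r -> 16 * L <= N%:R * q ->
  iid_prob rho (fun y : {ffun 'I_N -> 'I_R} =>
     (\sum_(r < R | S r) countN y r)%:R < N%:R * q / 4 :> K) <= expR (- L).
Proof.
move=> q0 hP hn.
have l2 := @ln2_le K.
have l20 : 0 <= ln (2 : K) by apply: ln_ge0; lra.
have e2 : expR (- ln (2 : K)) = 1 / 2 by rewrite expRN lnK ?posrE // div1r.
pose g := fun r : 'I_R => if S r then 1 / 2 else 1 : K.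
pose c := expR (- ln 2 * (N%:R * q / 4)) : K.
have hg : forall r, 0 <= g r by move=> r; rewrite /g; case: ifP.
have hc : 0 < c by exact: expR_gt0.
have hE : forall y : {ffun 'I_N -> 'I_R},
    (\sum_(r < R | S r) countN y r)%:R < N%:R * q / 4 :> K ->
    c <= \prod_(j < N) g (y j).
  move=> y /= hy; rewrite prod_count.
  have -> : \prod_(r < R) g r ^+ countN y r =
            \prod_(r < R | S r) (1 / 2) ^+ countN y r.
    rewrite [RHS]big_mkcond; apply: eq_bigr => r _; rewrite /g.
    by case: (S r) => //; rewrite expr1n.
  rewrite prodrXr -e2 -expRM_natl /c ler_expR.
  have := ler_wpM2l l20 (ltW hy); lra.
apply: le_trans (@iid_markov K R N rho g Hpos _ c hg hc hE) _.
set P := \sum_(r < R | S r) rho r in hP *.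
have hP1 : P <= 1.
  rewrite -Hsum /P [X in _ <= X](bigID S) /= lerDl.
  by apply: sumr_ge0 => r _; apply: ltW.
have hs : \sum_(r < R) rho r * g r = 1 - P / 2.
  have hT : 1 = P + \sum_(i < R | ~~ S i) rho i by rewrite -{1}Hsum (bigID S).
  rewrite (bigID S) /= /g.
  have -> : \sum_(i < R | S i) rho i * (if S i then 1 / 2 else 1) =
            (\sum_(i < R | S i) rho i) / 2.
    by rewrite mulr_suml; apply: eq_bigr => i ->; rewrite mul1r.
  have -> : \sum_(i < R | ~~ S i) rho i * (if S i then 1 / 2 else 1) =
            \sum_(i < R | ~~ S i) rho i.
    by apply: eq_bigr => i /negbTE ->; rewrite mulr1.
  rewrite -/P; lra.
rewrite hs.
have h1 : (1 - P / 2) ^+ N <= expR (- (q / 4)) ^+ N.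
  apply: lerXn2r; rewrite ?posrE ?nnegrE ?expR_ge0 //; first lra.
  have := expR_ge1Dx (- (P / 2)).
  have : expR (- (P / 2)) <= expR (- (q / 4)) by rewrite ler_expR; lra.
  lra.
apply: le_trans (ler_wpM2r _ h1) _; first by rewrite invr_ge0 expR_ge0.
rewrite -expRM_natl /c -expRB ler_expR.
have nq0 : 0 <= N%:R * q by rewrite mulr_ge0 // ltW.
have := ler_wpM2r nq0 l2.
lra.
Qed.

Theorem mainTheorem4 (K : realType) (R k N : nat) (rho : 'I_R -> K)
  (HR : (2 <= R)%N) (Hk : (1 <= k)%N)
  (Hpos : forall r, 0 < rho r) (Hsum : \sum_(r < R) rho r = 1)
  (Hsmall : (1 - tau k rho) / 2 <=
            \sum_(r < R | rho r <= 1 / (4 * (k%:R) ^+ 2)) rho r * (1 - rho r) ^+ k)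
  (Delta : K) (HD0 : 0 < Delta) (HD1 : Delta < 1)
  (HN : 12 * (k%:R) ^+ 2 * ln (2 * R%:R / Delta)
        + 16 * ln (2 / Delta) / (1 - tau k rho) <= N%:R) :
  1 - Delta <=
  @iid_prob K R N rho (fun Y => (1 - tau k rho) / 8 <= 1 - @tauhat K R N k Y).
Proof.
have rle1 : forall r, rho r <= 1.
  move=> r; rewrite -Hsum (bigD1 r) //= lerDl.
  by apply: sumr_ge0 => i _; apply: ltW.
have th0 : forall y : {ffun 'I_N -> 'I_R}, 0 <= 1 - @tauhat K R N k y.
  move=> y; rewrite /tauhat.
  have -> : forall a : K, 1 - (1 - a) = a by move=> a; ring.
  apply: sumr_ge0 => r _; apply: mulr_ge0; first exact: rhohat_ge0.
  by apply: exprn_ge0; rewrite subr_ge0 rhohat_le1.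
set q := 1 - tau k rho in Hsmall HN *.
have hq : q = \sum_(r < R) rho r * (1 - rho r) ^+ k by rewrite /q /tau; ring.
have q0 : 0 <= q.
  rewrite hq; apply: sumr_ge0 => r _; apply: mulr_ge0; first exact: ltW.
  by apply: exprn_ge0; rewrite subr_ge0.
have tot : \sum_(y : {ffun 'I_N -> 'I_R}) \prod_(j < N) rho (y j) = 1.
  by rewrite iid_total Hsum expr1n.
case: (eqVneq q 0) => [qe|qn0].
  rewrite /iid_prob (eq_bigl predT); first by rewrite tot; lra.
  by move=> y /=; rewrite qe mul0r th0.
have qpos : 0 < q by rewrite lt_def qn0 q0.
set L1 := ln (2 * R%:R / Delta) in HN.
set L2 := ln (2 / Delta) in HN.
have R1 : (1 : K) <= R%:R by rewrite ler1n; apply: leq_trans HR.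
have L1pos : 0 < L1.
  apply: ln_gt0; rewrite ltr_pdivlMr //; lra.
have L2pos : 0 <= L2.
  apply: ln_ge0; rewrite ler_pdivlMr //; lra.
have t2 : 0 <= 16 * L2 / q by rewrite divr_ge0 // ?mulr_ge0 // ltW.
have kk1 : (1 : K) <= k%:R by rewrite ler1n.
have hN1 : 12 * (k%:R) ^+ 2 * L1 <= N%:R by lra.
have hN2 : 16 * L2 <= N%:R * q.
  have t1 : 0 <= 12 * (k%:R) ^+ 2 * L1 :> K.
    by rewrite mulr_ge0 ?mulr_ge0 ?exprn_ge0 //; apply: ltW.
  have : 16 * L2 / q <= N%:R by lra.
  by rewrite ler_pdivrMr // mulrC.
have N0 : (0 < N)%N.
  have : (0 : K) < N%:R.
    apply: lt_le_trans hN1; rewrite mulr_gt0 // mulr_gt0 // exprn_gt0 //; lra.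
  by rewrite ltr0n.
pose S := fun r : 'I_R => rho r <= 1 / (4 * (k%:R) ^+ 2).
have hP : q / 2 <= \sum_(r < R | S r) rho r.
  apply: le_trans Hsmall _; apply: ler_sum => r _.
  rewrite -[X in _ <= X]mulr1 ler_wpM2l ?exprn_ile1 //; first exact: ltW.
    by rewrite subr_ge0.
  by have := Hpos r; lra.
pose B := fun y : {ffun 'I_N -> 'I_R} =>
  (\sum_(r < R | S r) countN y r)%:R < N%:R * q / 4 :> K.
pose Bs := fun (r : 'I_R) (y : {ffun 'I_N -> 'I_R}) =>
  S r && (N%:R / (2 * k%:R) < (countN y r)%:R :> K).
have hU := @union K R N rho Hpos Hsum
  (fun Y => q / 8 <= 1 - @tauhat K R N k Y) B Bs.
apply: le_trans (hU _).
  rewrite -(opprK (\sum_(r < R) iid_prob rho (Bs r))).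
  have hB : iid_prob rho B <= Delta / 2.
    have -> : Delta / 2 = expR (- L2).
      by rewrite expRN lnK ?posrE ?divr_gt0 // invf_div.
    exact: (@lower K R N rho Hpos Hsum S q L2 qpos hP hN2).
  have hBs : \sum_(r < R) iid_prob rho (Bs r) <= Delta / 2.
    have e : Delta / 2 = \sum_(r < R) (Delta / (2 * R%:R)).
      rewrite sumr_const card_ord -mulr_natr; field; lra.
    rewrite e; apply: ler_sum => r _.
    case: (boolP (S r)) => Sr.
      have -> : Delta / (2 * R%:R) = expR (- L1).
        by rewrite expRN lnK ?posrE ?divr_gt0 ?mulr_gt0 // ?invf_div //; lra.
      have -> : iid_prob rho (Bs r) = iid_prob rho (fun y : {ffun 'I_N -> 'I_R} =>
          N%:R / (2 * k%:R) < (countN y r)%:R :> K).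
        by rewrite /iid_prob; apply: eq_bigl => y; rewrite /Bs Sr.
      exact: (@upper K R N k rho Hpos Hsum r L1 Hk Sr hN1).
    rewrite /iid_prob big_pred0; last by move=> y; rewrite /Bs (negbTE Sr).
    by rewrite divr_ge0 // ?mulr_ge0 //; lra.
  lra.
move=> y /negP hy.
case: (boolP (B y)) => hb; first by left.
right; case: (boolP [exists r, Bs r y]) => [/existsP [r hr]|/existsPn hn].
  by exists r.
exfalso; apply: hy; apply: (@det K R N k S y q N0 Hk).
  move=> r Sr; have := hn r; rewrite /Bs Sr /= -leNgt; done.
by move: hb; rewrite /B -leNgt.
Qed.
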